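(* Let $m\ge 2$ and let $C_{4m}=v_0v_1\cdots v_{4m-1}v_0$. Let $\mathscr A$ be any partition of $\{v_i: i \text{ even}\}$ into blocks of size $2$ and $\mathscr B$ any partition of $\{v_i : i\text{ odd}\}$ into blocks of size $2$. Let $G_{2m}(\mathscr A,\mathscr B)$ be the (not necessarily simple) $4$-regular graph obtained from $C_{4m}$ by identifying the two vertices of each block of $\mathscr A\cup\mathscr B$ into a single vertex. Then $\chi_{la}(G_{2m}(\mathscr A,\mathscr B))=3$.
   Context: Identifying a set of pairwise nonadjacent vertices means replacing them by one new vertex incident to all edges previously incident to any of them (parallel edges may arise). For a connected (multi)graph $G$ with edge set $E$, $|E|=q$, a local antimagic labeling is a bijection $f:E\to\{1,\dots,q\}$ such that adjacent vertices $x,y$ satisfy $f^+(x)\ne f^+(y)$, where $f^+(x)$ is the sum of the labels of the edges incident to $x$; $\chi_{la}(G)$ is the minimum number of distinct values of $f^+$ over all local antimagic labelings of $G$. *)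

(* Defs.v *)
From mathcomp Require Import all_boot.
Set Implicit Arguments. Unset Strict Implicit. Unset Printing Implicit Defensive.

(* A finite multigraph is given by a finite vertex set [Vs] (inside an ambient
   finType [V]), a finite edge type [E], and an endpoint map [ends]. *)

(* f^+(v): sum of labels of edges incident to v (a loop would count twice). *)
Definition vsum (V E : finType) (ends : E -> V * V) (f : E -> nat) (v : V) : nat :=
  \sum_(e : E) f e * (((ends e).1 == v) + ((ends e).2 == v)).

Definition adjacent (V E : finType) (ends : E -> V * V) (x y : V) : bool :=
  [exists e, (ends e == (x, y)) || (ends e == (y, x))].

Definition local_antimagic (V E : finType) (ends : E -> V * V) (f : E -> nat) : Prop :=
  [/\ injective f, (forall e, 0 < f e <= #|E|) &
      (forall x y, adjacent ends x y -> vsum ends f x != vsum ends f y)].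

Definition nvalues (V E : finType) (Vs : {set V}) (ends : E -> V * V) (f : E -> nat) : nat :=
  size (undup [seq vsum ends f v | v <- enum Vs]).

Definition chi_la_is (V E : finType) (Vs : {set V}) (ends : E -> V * V) (k : nat) : Prop :=
  (exists f, local_antimagic ends f /\ nvalues Vs ends f = k) /\
  (forall f, local_antimagic ends f -> k <= nvalues Vs ends f).

(* The cycle C_{4m} on vertices v_i = i : 'I_(4m), edge i joining v_i and v_{i+1 mod 4m}.
   Identifying the vertices of each block of the partition P: the vertices of the
   new multigraph are the blocks of P, edge i joins the block of i and the block of i+1. *)
Definition ident_ends (m : nat) (P : {set {set 'I_(4 * m)}}) (i : 'I_(4 * m))
  : {set 'I_(4 * m)} * {set 'I_(4 * m)} :=
  (pblock P i, pblock P (ordS i)).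

Definition evens (m : nat) : {set 'I_(4 * m)} := [set i : 'I_(4 * m) | ~~ odd i].
Definition odds (m : nat) : {set 'I_(4 * m)} := [set i : 'I_(4 * m) | odd i].

(* Main.v *)
Require Import Defs.
From mathcomp Require Import all_boot zify.
Set Implicit Arguments. Unset Strict Implicit. Unset Printing Implicit Defensive.

Lemma ord_pred_val n (v : 'I_n) : nat_of_ord (ord_pred v) = if v == 0 :> nat then n.-1 else v.-1.
Proof.
case: v => [[|v] lt] /=.
  by rewrite add0n modn_small // prednK // (leq_ltn_trans _ lt).
by rewrite modnDr modn_small // ltnW.
Qed.

Lemma ordS_val n (v : 'I_n) : nat_of_ord (ordS v) = if v.+1 == n then 0 else v.+1.
Proof.
case: v => [v lt] /=; case: eqP => [->|ne]; first by rewrite modnn.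
by rewrite modn_small //; rewrite ltn_neqAle; apply/andP; split => //; apply/eqP.
Qed.

Section S.
Variable m : nat.
Variables A B : {set {set 'I_(4*m)}}.
Hypothesis hm : 2 <= m.
Hypothesis pA : partition A (evens m).
Hypothesis sA : {in A, forall X : {set 'I_(4 * m)}, #|X| = 2}.
Hypothesis pB : partition B (odds m).
Hypothesis sB : {in B, forall X : {set 'I_(4 * m)}, #|X| = 2}.
Local Notation P := (A :|: B).
Local Notation en := (ident_ends (A :|: B)).

Lemma coverP : cover P = setT.
Proof.
rewrite /cover bigcup_setU -!/(cover _) (cover_partition pA) (cover_partition pB).
by apply/setP=> i; rewrite !inE; case: odd.
Qed.

Lemma trivP : trivIset P.
Proof.
apply: trivIsetU; [exact: partition_trivIset pA | exact: partition_trivIset pB|].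
rewrite (cover_partition pA) (cover_partition pB).
by rewrite -setI_eq0; apply/eqP/setP => i; rewrite !inE; case: odd.
Qed.

Lemma pbP v : pblock P v \in P.
Proof. by apply: pblock_mem; rewrite coverP inE. Qed.

Lemma pbv v : v \in pblock P v.
Proof. by rewrite mem_pblock coverP inE. Qed.

Lemma eq_pb X v : X \in P -> (pblock P v == X) = (v \in X).
Proof.
move=> XP; apply/eqP/idP => [<-|vX]; [exact: pbv | exact: def_pblock trivP XP vX].
Qed.

Lemma parity X u w : X \in P -> u \in X -> w \in X -> odd u = odd w.
Proof.
move=> /setUP [XA|XB] uX wX.
  have /subsetP sub: X \subset evens m by rewrite -(cover_partition pA); apply: bigcup_sup.
  by move: (sub u uX) (sub w wX); rewrite !inE; do 2 case: odd.
have /subsetP sub: X \subset odds m by rewrite -(cover_partition pB); apply: bigcup_sup.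
by move: (sub u uX) (sub w wX); rewrite !inE; do 2 case: odd.
Qed.

Lemma card2 X : X \in P -> #|X| = 2.
Proof. by case/setUP; [exact: sA | exact: sB]. Qed.

Lemma vsumE f X : X \in P -> vsum en f X = \sum_(v in X) (f v + f (ord_pred v)).
Proof.
move=> XP; rewrite /vsum /ident_ends /=.
under eq_bigr do rewrite !eq_pb // mulnDr.
rewrite big_split /= [in RHS]big_split /=.
congr (_ + _).
  by rewrite [RHS]big_mkcond; apply: eq_bigr => e _; case: (e \in X); rewrite ?muln1 ?muln0.
rewrite (reindex_inj (@ord_pred_inj _)) /= [RHS]big_mkcond; apply: eq_bigr => e _.
by rewrite ord_predK; case: (e \in X); rewrite ?muln1 ?muln0.
Qed.

Lemma vsum2 f X : X \in P -> exists u w, [/\ X = [set u; w], u != w, odd u = odd w &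
   vsum en f X = (f u + f (ord_pred u)) + (f w + f (ord_pred w))].
Proof.
move=> XP; have /cards2P [u [w [uw eX]]] : #|X| == 2 by rewrite card2.
exists u, w; split => //.
  by apply: (parity XP); rewrite eX !inE eqxx ?orbT.
by rewrite vsumE // eX big_setU1 /= ?big_set1 // inE.
Qed.


Definition f0 (i : 'I_(4*m)) : nat :=
  if odd i then (if i.+1 == 4*m then 2*m+1 else 2*m + i./2 + 2) else 2*m - i./2.

Lemma h0 v : f0 v + f0 (ord_pred v) =
  if odd v then (if v.+1 == 4*m then 2*m+2 else 4*m+2) else 4*m+1.
Proof.
rewrite /f0; have Hp := ord_pred_val v; have Hv := ltn_ord v.
move: (nat_of_ord (ord_pred v)) Hp => p; move: (nat_of_ord v) Hv => x.
by do ![case: ifP] => *; lia.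
Qed.

Lemma f0_inj : injective f0.
Proof.
move=> i j; rewrite /f0 => H; apply: val_inj => /=.
have Hi := ltn_ord i; have Hj := ltn_ord j.
move: (nat_of_ord i) (nat_of_ord j) Hi Hj H => x y Hx Hy.
by do ![case: ifP] => *; lia.
Qed.

Lemma f0_range e : 0 < f0 e <= #|'I_(4*m)|.
Proof.
rewrite card_ord /f0; have He := ltn_ord e; move: (nat_of_ord e) He => x Hx.
by do ![case: ifP] => *; lia.
Qed.

Definition S0 v := vsum en f0 (pblock P v).

Lemma S0_val v : exists u w, [/\ pblock P v = [set u; w], u != w, odd u = odd v & 
   S0 v = (f0 u + f0 (ord_pred u)) + (f0 w + f0 (ord_pred w))].
Proof.
have [u [w [eX uw puw E]]] := vsum2 f0 (pbP v).
exists u, w; split => //.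
apply: (parity (pbP v)); [rewrite eX !inE eqxx // | exact: pbv].
Qed.

Lemma S0_even (v : 'I_(4*m)) : ~~ odd v -> S0 v = 8*m+2.
Proof.
move=> ev; have [u [w [eX uw puv ->]]] := S0_val v.
have puw : odd u = odd w by apply: (parity (pbP v)); rewrite eX !inE eqxx ?orbT.
by rewrite !h0 -puw puv (negPf ev); lia.
Qed.

Lemma S0_odd (v : 'I_(4*m)) : odd v -> S0 v = 8*m+4 \/ S0 v = 6*m+4.
Proof.
move=> ov; have [u [w [eX uw puv ->]]] := S0_val v.
have puw : odd u = odd w by apply: (parity (pbP v)); rewrite eX !inE eqxx ?orbT.
have uw' : (nat_of_ord u) != w by [].
rewrite !h0 -puw puv ov; move: (nat_of_ord u) (nat_of_ord w) uw' => x y uw'.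
by do ![case: ifP] => *; lia.
Qed.

Lemma S0_odd1 (v : 'I_(4*m)) : odd v -> (forall z : 'I_(4*m), z \in pblock P v -> z.+1 != 4*m) -> S0 v = 8*m+4.
Proof.
move=> ov hz; have [u [w [eX uw puv ->]]] := S0_val v.
have puw : odd u = odd w by apply: (parity (pbP v)); rewrite eX !inE eqxx ?orbT.
have hu : u.+1 != 4*m by apply: hz; rewrite eX !inE eqxx.
have hw : w.+1 != 4*m by apply: hz; rewrite eX !inE eqxx orbT.


rewrite !h0 -puw puv ov (negPf hu) (negPf hw); lia.
Qed.

Lemma S0_odd2 (v : 'I_(4*m)) : v.+1 = 4*m -> S0 v = 6*m+4.
Proof.
move=> hv; have [u [w [eX uw puv ->]]] := S0_val v.
have puw : odd u = odd w by apply: (parity (pbP v)); rewrite eX !inE eqxx ?orbT.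
have ov : odd v by lia.
have ou : odd u by rewrite puv.
have ow : odd w by rewrite -puw.
have uw' : (nat_of_ord u) != w by [].
have : v \in [set u; w] by rewrite -eX pbv.
rewrite !inE !h0 ou ow => /orP [] /eqP ev; subst v;
move: (nat_of_ord u) (nat_of_ord w) uw' hv => x y *;
by do ![case: ifP] => *; lia.
Qed.


Lemma odd_ordS (e : 'I_(4*m)) : odd (ordS e) = ~~ odd e.
Proof.
rewrite ordS_val; have := ltn_ord e; move: (nat_of_ord e) => x Hx.
case: ifP => /eqP H /=; last done.
have : odd x.+1 = odd (4*m) by rewrite H.
by rewrite /= oddM /= => ->.
Qed.

Lemma S0_diff (e e' : 'I_(4*m)) : odd e' = ~~ odd e -> S0 e != S0 e'.
Proof.
case oe: (odd e) => /= H.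
  by rewrite (S0_even (negbT H)); case: (S0_odd oe) => ->; apply/eqP; lia.
by rewrite (S0_even (negbT oe)); case: (S0_odd H) => ->; apply/eqP; lia.
Qed.

Lemma f0_la : local_antimagic en f0.
Proof.
split; [exact: f0_inj | exact: f0_range |].
move=> x y /existsP [e /orP [] /eqP E]; rewrite /ident_ends in E; case: E => <- <-.
  by apply: S0_diff; rewrite odd_ordS.
by rewrite eq_sym; apply: S0_diff; rewrite odd_ordS.
Qed.

Lemma exists_b : exists v, S0 v = 8*m+4.
Proof.
have l1 : 1 < 4*m by lia.
have l3 : 3 < 4*m by lia.
pose o1 : 'I_(4*m) := Ordinal l1.
pose o3 : 'I_(4*m) := Ordinal l3.
case: (boolP [exists z in pblock P o1, z.+1 == 4*m]) => [/existsP [z /andP [zin hz]] | N].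
  exists o3; apply: S0_odd1 => // z' z'in; apply/negP => hz'.
  have ez : z' = z by apply: val_inj; move: hz hz'; rewrite /=; lia.
  subst z'.
  have e31 : pblock P o3 = pblock P o1.
    by rewrite -(def_pblock trivP (pbP o3) z'in) (def_pblock trivP (pbP o1) zin).
  have [u [w [eX _ _ _]]] := S0_val o1.
  have h1 : o1 \in [set u; w] by rewrite -eX pbv.
  have h3 : o3 \in [set u; w] by rewrite -eX -e31 pbv.
  have h4 : z \in [set u; w] by rewrite -eX.
  move: h1 h3 h4 hz; rewrite !inE => /orP [] /eqP e1 /orP [] /eqP e3 /orP [] /eqP e4;
  move: (congr1 (@nat_of_ord _) e1) (congr1 (@nat_of_ord _) e3) (congr1 (@nat_of_ord _) e4) => /=; lia.
exists o1; apply: S0_odd1 => // z zin; apply/negP => hz; move/negP: N; apply.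
by apply/existsP; exists z; rewrite zin hz.
Qed.

Lemma f0_nv : nvalues P en f0 = 3.
Proof.
rewrite /nvalues.
set s := [seq _ | _ <- _].
have l0 : 0 < 4*m by lia.
have lt : (4*m).-1 < 4*m by lia.
have u3 : uniq [:: 8*m+2; 8*m+4; 6*m+4].
  rewrite /= !inE !negb_or; apply/andP; split; [apply/andP; split|]; apply/eqP; lia.
have E : undup s =i [:: 8*m+2; 8*m+4; 6*m+4].
  move=> x; rewrite mem_undup; apply/mapP/idP.
    move=> [X XP ->]; rewrite mem_enum in XP.
    have [u [w [eX _ _ _]]] := vsum2 f0 XP.
    have uX : u \in X by rewrite eX !inE eqxx.
    rewrite -(def_pblock trivP XP uX) -/(S0 u) !inE.
    case ou: (odd u).
      by case: (S0_odd ou) => ->; rewrite eqxx ?orbT.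
    by rewrite (S0_even (negbT ou)) eqxx.
  rewrite !inE => /or3P [] /eqP ->.
  - exists (pblock P (Ordinal l0)); first by rewrite mem_enum pbP.
    by rewrite -/(S0 _) S0_even.
  - have [v Hv] := exists_b; exists (pblock P v); first by rewrite mem_enum pbP.
    by rewrite -/(S0 _) Hv.
  - exists (pblock P (Ordinal lt)); first by rewrite mem_enum pbP.
    by rewrite -/(S0 _) S0_odd2 //=; lia.
by rewrite (perm_size (uniq_perm (undup_uniq s) u3 E)).
Qed.


Lemma hsum f (C : {set 'I_(4*m)}) :
  \sum_(v in C) (f v + f (ord_pred v)) = \sum_v f v * ((v \in C) + (ordS v \in C)).
Proof.
rewrite big_split /=.
under [RHS]eq_bigr do rewrite mulnDr.
rewrite [RHS]big_split /=; congr (_ + _).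
  by rewrite big_mkcond; apply: eq_bigr => e _; case: (e \in C); rewrite ?muln1 ?muln0.
rewrite big_mkcond (reindex_inj (@ordS_inj _)) /=; apply: eq_bigr => e _.
by rewrite ordSK; case: (ordS e \in C); rewrite ?muln1 ?muln0.
Qed.

Lemma card_eo : #|evens m| = #|odds m|.
Proof.
rewrite -!sum1_card big_mkcond [RHS]big_mkcond (reindex_inj (@ordS_inj _)) /=.
by apply: eq_bigr => e _; rewrite !inE odd_ordS negbK.
Qed.

Lemma lower f : local_antimagic en f -> 3 <= nvalues P en f.
Proof.
case=> _ _ Hadj.
pose S := fun v => vsum en f (pblock P v).
have adjS : forall v, S v != S (ordS v).
  by move=> v; apply: Hadj; apply/existsP; exists v; rewrite /ident_ends eqxx.
rewrite leqNgt; apply/negP => Hlt.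
set s := [seq vsum en f v | v <- enum P].
have ins v : S v \in s by apply: map_f; rewrite mem_enum pbP.
have l0 : 0 < 4*m by lia.
have l1 : 1 < 4*m by lia.
pose o0 : 'I_(4*m) := Ordinal l0.
pose o1 : 'I_(4*m) := Ordinal l1.
have E01 : ordS o0 = o1 by apply: val_inj; rewrite /= modn_small.

pose a := S o0; pose b := S o1.
have ab : a != b by rewrite /a /b -E01.
have two : forall v, (S v == a) || (S v == b).
  move=> v; case: (boolP (S v == a)) => //= na; case: (boolP (S v == b)) => //= nb; exfalso.
  have u : uniq [:: a; b; S v].
    by rewrite /= !inE negb_or ab eq_sym na eq_sym nb.
  have := uniq_leq_size u (_ : {subset [:: a; b; S v] <= undup s}).
  move: Hlt; rewrite /nvalues -/s => Hlt H.
  have : 3 <= size (undup s).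
    apply: H => x; rewrite !inE mem_undup => /or3P [] /eqP ->; apply: ins.
  by rewrite leqNgt Hlt.
have par : forall v : 'I_(4*m), S v = if odd v then b else a.
  suff H : forall k (v : 'I_(4*m)), nat_of_ord v = k -> S v = if odd k then b else a.
    by move=> v; apply: H.
  elim=> [|k IH] v hv.
    by rewrite /= /a; congr S; apply: val_inj.
  have lk : k < 4*m by have := ltn_ord v; lia.
  have Ev : v = ordS (Ordinal lk).
    by apply: val_inj; rewrite /= hv modn_small // -hv ltn_ord.
  have := adjS (Ordinal lk); rewrite -Ev (IH (Ordinal lk) erefl) /=.
  case: (odd k) => /= ne; case/orP: (two v) => /eqP H //; rewrite H ?eqxx in ne.
    by rewrite H.
  by rewrite H.
have valX : forall (X C : {set 'I_(4*m)}) (c : nat), X \in P -> X \subset C ->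
    (forall v, v \in C -> S v = c) -> vsum en f X = c.
  move=> X C c XP XC HC.
  have [u [w [eX _ _ _]]] := vsum2 f XP.
  have uX : u \in X by rewrite eX !inE eqxx.
  rewrite -(def_pblock trivP XP uX); apply: HC; exact: (subsetP XC).
have sA' : \sum_(X in A) vsum en f X = #|A| * a.
  rewrite -sum_nat_const; apply: eq_bigr => X XA.
  apply: (valX X (evens m)); first by rewrite inE XA.
    by rewrite -(cover_partition pA); apply: bigcup_sup.
  by move=> v; rewrite inE par => /negPf ->.
have sB' : \sum_(X in B) vsum en f X = #|B| * b.
  rewrite -sum_nat_const; apply: eq_bigr => X XB.
  apply: (valX X (odds m)); first by rewrite inE XB orbT.
    by rewrite -(cover_partition pB); apply: bigcup_sup.
  by move=> v; rewrite inE par => ->.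
have tA : \sum_(X in A) vsum en f X = \sum_v f v.
  have -> : \sum_(X in A) vsum en f X = \sum_(v in evens m) (f v + f (ord_pred v)).
    rewrite -(cover_partition pA) big_trivIset ?(partition_trivIset pA) //.
    by apply: eq_bigr => X XA; rewrite vsumE // inE XA.
  by rewrite hsum; apply: eq_bigr => v _; rewrite !inE odd_ordS negbK; case: odd; rewrite muln1.
have tB : \sum_(X in B) vsum en f X = \sum_v f v.
  have -> : \sum_(X in B) vsum en f X = \sum_(v in odds m) (f v + f (ord_pred v)).
    rewrite -(cover_partition pB) big_trivIset ?(partition_trivIset pB) //.
    by apply: eq_bigr => X XB; rewrite vsumE // inE XB orbT.
  by rewrite hsum; apply: eq_bigr => v _; rewrite !inE odd_ordS; case: odd; rewrite muln1.
have cA : #|evens m| = #|A| * 2.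
  by rewrite (card_partition pA) -sum_nat_const; apply: eq_bigr => X XA; rewrite sA.
have cB : #|odds m| = #|B| * 2.
  by rewrite (card_partition pB) -sum_nat_const; apply: eq_bigr => X XB; rewrite sB.
have pos : 0 < #|evens m| by apply/card_gt0P; exists o0; rewrite inE.
have eAB : #|A| = #|B| by move: card_eo; rewrite cA cB; lia.
have posA : 0 < #|A| by lia.
move/negP: ab; apply; rewrite -(eqn_pmul2l posA); apply/eqP.
by rewrite -sA' tA -tB sB' eAB.
Qed.

End S.

Theorem mainTheorem9 (m : nat) (A B : {set {set 'I_(4 * m)}}) :
  2 <= m ->
  partition A (evens m) -> {in A, forall X : {set 'I_(4 * m)}, #|X| = 2} ->
  partition B (odds m) -> {in B, forall X : {set 'I_(4 * m)}, #|X| = 2} ->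
  chi_la_is (A :|: B) (ident_ends (A :|: B)) 3.
Proof.
move=> hm pA sA pB sB; split.
  exists (@f0 m); split; [exact: f0_la | exact: f0_nv].
exact: lower.
Qed.
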